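(* Let $\mathcal B$ be finite, $\eta>0$, $Q,\tilde Q\in\mathbb R^{\mathcal B}$, $V=\eta^{-1}\log\sum_be^{\eta Q(b)}$, $\tilde V=\eta^{-1}\log\sum_be^{\eta\tilde Q(b)}$, $A=Q-V\mathbf 1$, $\tilde A=\tilde Q-\tilde V\mathbf 1$, $\nu=\exp(\eta A)$, $\tilde\nu=\exp(\eta\tilde A)$, and let $B_A>0$ with $\max\{\|A\|_\infty,\|\tilde A\|_\infty\}\le B_A$. Then $$D_{\rm H}^2(\nu,\tilde\nu)\ge\frac{\eta^2}{8(1+\eta B_A)^2}\,\langle\nu,(\tilde A-A)^2\rangle_{\mathcal B}.$$
   Context: $D_{\rm H}^2(p,q)=\frac12\sum_b(\sqrt{p(b)}-\sqrt{q(b)})^2$; $\langle f,g\rangle_{\mathcal B}=\sum_bf(b)g(b)$; squares are entrywise. *)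

(* Defs.v *)
From mathcomp Require Import all_boot all_order all_algebra.
From mathcomp Require Import all_classical all_reals.
From mathcomp.analysis Require Import sequences exp.
Set Implicit Arguments. Unset Strict Implicit. Unset Printing Implicit Defensive.
Import Order.TTheory GRing.Theory Num.Theory.
Local Open Scope ring_scope.

Definition hellinger2 {R : realType} {B : finType} (p q : B -> R) : R :=
  2^-1 * \sum_(b : B) (Num.sqrt (p b) - Num.sqrt (q b)) ^+ 2.

Definition innerB {R : realType} {B : finType} (f g : B -> R) : R :=
  \sum_(b : B) f b * g b.

Definition softV {R : realType} {B : finType} (eta : R) (Q : B -> R) : R :=
  eta^-1 * ln (\sum_(b : B) expR (eta * Q b)).

Definition advA {R : realType} {B : finType} (eta : R) (Q : B -> R) : B -> R :=
  fun b => Q b - softV eta Q.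

Definition supnorm {R : realType} {B : finType} (f : B -> R) : R :=
  \big[Order.max/0]_(b : B) `|f b|.

(* Main.v *)
Require Import Defs.
From mathcomp Require Import all_boot all_order all_algebra.
From mathcomp Require Import all_classical all_reals.
From mathcomp.analysis Require Import sequences exp.
From mathcomp Require Import ring lra.
Import Order.TTheory GRing.Theory Num.Theory.
Local Open Scope ring_scope.

Lemma key_t {R : realType} (t c : R) : 0 <= c -> `|t| <= c ->
  t ^+ 2 <= (1 + c) ^+ 2 * (1 - expR t) ^+ 2.
Proof.
move=> c0 tc.
have : `|t| <= (1 + c) * `|1 - expR t|.
  have [t0|t0] := leP 0 t.
    have h := expR_ge1Dx t.
    rewrite ger0_norm // ler0_norm; last lra.
    nra.
  have h := expR_ge1Dx (- t).
  have e1 : expR t * expR (- t) = 1 by rewrite -expRD subrr expR0.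
  have et := expR_gt0 t.
  rewrite ltr0_norm // ger0_norm; last by nra.
  rewrite ltr0_norm // in tc.
  nra.
move=> h.
have h2 : 0 <= `|t| by [].
rewrite -(real_normK (num_real t)) -(real_normK (num_real (1 - expR t))).
have h3 : 0 <= `|1 - expR t| by [].
nra.
Qed.

Lemma sqrt_expR {R : realType} (z : R) : Num.sqrt (expR z) = expR (z / 2).
Proof.
rewrite {1}(splitr z) expRD -expr2 sqrtr_sqr ger0_norm //.
exact: ltW (expR_gt0 _).
Qed.

Lemma key {R : realType} (a b c : R) : 0 <= c -> `|a| <= c -> `|b| <= c ->
  expR a * (b - a) ^+ 2 / (4 * (1 + c) ^+ 2) <= (expR (a / 2) - expR (b / 2)) ^+ 2.
Proof.
move=> c0 ha hb.
set t := (b - a) / 2.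
have hbt : b / 2 = a / 2 + t by rewrite /t; field.
have hk := @key_t R t c c0.
have tc : `|t| <= c.
  rewrite /t normrM (ger0_norm (x:=2^-1)) ?invr_ge0 //.
  have := ler_normB b a. lra.
have := hk tc => {}hk.
rewrite hbt expRD.
have ea : expR a = expR (a / 2) ^+ 2 by rewrite expr2 -expRD -splitr.
have pos : 0 < (1 + c) ^+ 2 by apply: exprn_gt0; lra.
rewrite ler_pdivrMr; last by nra.
have -> : (b - a) ^+ 2 = 4 * t ^+ 2 by rewrite /t; field.
rewrite ea.
have e2 := expR_gt0 (a / 2).
set E := expR (a / 2).
have -> : (E - E * expR t) ^+ 2 = E ^+ 2 * (1 - expR t) ^+ 2 by ring.
have E2 : 0 <= E ^+ 2 by apply: sqr_ge0.
nra.
Qed.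

Lemma supnorm_le {R : realType} {B : finType} (f : B -> R) b : `|f b| <= supnorm f.
Proof. rewrite /supnorm; exact: le_bigmax. Qed.

Theorem mainTheorem11 (R : realType) (B : finType) (eta : R) (Q Qt : B -> R)
  (BA : R) (heta : 0 < eta) (hBA : 0 < BA)
  (hA : Order.max (supnorm (advA eta Q)) (supnorm (advA eta Qt)) <= BA) :
  let A := advA eta Q in
  let At := advA eta Qt in
  let nu := fun b => expR (eta * A b) in
  let nut := fun b => expR (eta * At b) in
  hellinger2 nu nut >=
    eta ^+ 2 / (8 * (1 + eta * BA) ^+ 2) *
      innerB nu (fun b => (At b - A b) ^+ 2).
Proof.
cbv zeta; set A := advA eta Q; set At := advA eta Qt.
rewrite /hellinger2 /innerB big_distrr /= big_distrr /=.
apply: ler_sum => b _.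
rewrite !sqrt_expR.
rewrite ge_max in hA; case/andP: hA => h1 h2.
have hAb : `|eta * A b| <= eta * BA.
  rewrite normrM gtr0_norm //; apply: ler_wpM2l; first exact: ltW.
  apply: le_trans h1; exact: (supnorm_le A b).
have hAtb : `|eta * At b| <= eta * BA.
  rewrite normrM gtr0_norm //; apply: ler_wpM2l; first exact: ltW.
  apply: le_trans h2; exact: (supnorm_le At b).
have c0 : 0 <= eta * BA by apply: mulr_ge0; exact: ltW.
have := @key R _ _ _ c0 hAb hAtb.
have -> : (eta * At b - eta * A b) ^+ 2 = eta ^+ 2 * (At b - A b) ^+ 2 by ring.
set X := (expR _ - expR _) ^+ 2.
move=> h.
have -> : eta ^+ 2 / (8 * (1 + eta * BA) ^+ 2) * (expR (eta * A b) * (At b - A b) ^+ 2)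
  = 2^-1 * (expR (eta * A b) * (eta ^+ 2 * (At b - A b) ^+ 2) / (4 * (1 + eta * BA) ^+ 2)).
  field; lra.
apply: ler_wpM2l => //; lra.
Qed.
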